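(* Let $(E,\mathcal L)$ be a simple COM with tope set $\mathcal T$ and tope graph $G$. Then $$\mathcal L=\{X(G')\mid G'\text{ antipodal subgraph of }G\}=\{X(G')\mid G'\text{ antipodal gated subgraph of }G\}=\mathcal L(G),$$ where $\mathcal L(G)=\{X\in\{+,-,0\}^E\mid X\circ(-Y)\in\mathcal T\text{ for all }Y\in\mathcal T\}$. In particular, in the tope graph of a COM all antipodal subgraphs are gated.
   Context: Sign vectors: $E$ finite nonempty, $\emptyset\ne\mathcal L\subseteq\{+,-,0\}^E$; $S(X,Y)=\{e:X_eY_e=-\}$; $(X\circ Y)_e=X_e$ if $X_e\ne0$ else $Y_e$; $(-X)_e=-X_e$. (FS): $X\circ-Y\in\mathcal L$ for all $X,Y\in\mathcal L$. (SE): for $X,Y\in\mathcal L$, $e\in S(X,Y)$ there is $Z\in\mathcal L$ with $Z_e=0$ and $Z_f=(X\circ Y)_f$ for $f\notin S(X,Y)$. A COM satisfies (FS) and (SE). Simple: each coordinate takes all values $+,-,0$ on $\mathcal L$, and for $e\neq f$ there are $X,Y\in\mathcal L$ with $\{X_eX_f,Y_eY_f\}=\{+,-\}$. Topes $\mathcal T=\mathcal L\cap\{+,-\}^E$; the tope graph is the subgraph of the hypercube on $\{+,-\}^E$ induced by $\mathcal T$. For a simple COM the tope graph is an isometric subgraph (partial cube) whose $\Theta$-classes are indexed by $E$: the class of $e$ consists of the edges joining topes that differ exactly in coordinate $e$, and its halfspaces are the topes with $e$-coordinate $+$ resp. $-$. For a convex subgraph $G'$ of $G$, $X(G')\in\{+,-,0\}^E$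 has $X(G')_e=+$ (resp. $-$) if all vertices of $G'$ have $e$-coordinate $+$ (resp. $-$), and $0$ otherwise. A subgraph is convex if it contains all shortest paths between its vertices; $\mathrm{conv}(S)$ is the smallest convex subgraph containing $S$. For a subgraph $H$ and $x\in H$, $-_Hx\in H$ with $\mathrm{conv}(x,-_Hx)=H$ is the antipode of $x$ in $H$; $H$ is antipodal if every vertex has an antipode in $H$. $H$ is gated if for every vertex $x$ of $G$ there is $x'\in H$ such that for every $y\in H$ some shortest $x$–$y$ path passes through $x'$. *)

(* Defs.v *)
From mathcomp Require Import all_boot.
Set Implicit Arguments. Unset Strict Implicit. Unset Printing Implicit Defensive.

(* Signs: Some true = +, Some false = -, None = 0. *)
Definition sign := option bool.
Definition sPlus : sign := Some true.
Definition sMinus : sign := Some false.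
Definition sZero : sign := None.

Section COM.
Variable E : finType.

Definition svec := {ffun E -> sign}.

Definition sneg (s : sign) : sign := omap negb s.
Definition sprod (s t : sign) : sign :=
  match s, t with Some a, Some b => Some (a == b) | _, _ => None end.

Definition sep (X Y : svec) : {set E} := [set e | sprod (X e) (Y e) == sMinus].
Definition comp (X Y : svec) : svec :=
  [ffun e => if X e != sZero then X e else Y e].
Definition vneg (X : svec) : svec := [ffun e => sneg (X e)].

Definition FS (L : {set svec}) : Prop :=
  forall X Y, X \in L -> Y \in L -> comp X (vneg Y) \in L.

Definition SE (L : {set svec}) : Prop :=
  forall X Y e, X \in L -> Y \in L -> e \in sep X Y ->
    exists2 Z, Z \in L & Z e = sZero /\
      forall f, f \notin sep X Y -> Z f = comp X Y f.

Definition COM (L : {set svec}) : Prop := L != set0 /\ FS L /\ SE L.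

Definition simple (L : {set svec}) : Prop :=
  (forall e (s : sign), exists2 X, X \in L & X e = s) /\
  (forall e f, e != f -> exists X, exists Y,
     [/\ X \in L, Y \in L,
         sprod (X e) (X f) != sprod (Y e) (Y f),
         sprod (X e) (X f) != sZero & sprod (Y e) (Y f) != sZero]).

Definition topes (L : {set svec}) : {set svec} :=
  [set X in L | [forall e, X e != sZero]].

Definition tadj (T : {set svec}) : rel svec :=
  fun x y => [&& x \in T, y \in T & #|[set e | x e != y e]| == 1].

Definition shortest (T : {set svec}) (x : svec) (p : seq svec) : Prop :=
  path (tadj T) x p /\
  forall q, path (tadj T) x q -> last x q = last x p -> size p <= size q.

(* subgraphs are given by their vertex sets (convex subgraphs are induced) *)
Definition convex (T H : {set svec}) : Prop :=
  H \subset T /\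
  forall x p, x \in H -> last x p \in H -> shortest T x p -> all (mem H) p.

Definition is_conv (T S H : {set svec}) : Prop :=
  [/\ convex T H, S \subset H &
      forall H', convex T H' -> S \subset H' -> H \subset H'].

Definition antipode (T H : {set svec}) (x y : svec) : Prop :=
  y \in H /\ is_conv T [set x; y] H.

Definition antipodal (T H : {set svec}) : Prop :=
  [/\ H \subset T, H != set0 &
      forall x, x \in H -> exists y, antipode T H x y].

Definition gated (T H : {set svec}) : Prop :=
  H \subset T /\
  forall x, x \in T -> exists2 x', x' \in H &
    forall y, y \in H -> exists p, [/\ shortest T x p, last x p = y & x' \in x :: p].

Definition XG (H : {set svec}) : svec :=
  [ffun e => if [forall x in H, x e == sPlus] then sPlus
             else if [forall x in H, x e == sMinus] then sMinus else sZero].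

Definition LG (T : {set svec}) : {set svec} :=
  [set X | [forall Y in T, comp X (vneg Y) \in T]].

End COM.

(* Main.v *)
Require Import Defs.
From mathcomp Require Import all_boot.
From mathcomp Require Import zify.
Set Implicit Arguments. Unset Strict Implicit. Unset Printing Implicit Defensive.

Lemma ex_max (T0 : finType) (P : pred T0) (F : T0 -> nat) :
  (exists x, P x) -> exists2 x, P x & forall y, P y -> F y <= F x.
Proof.
case=> x0 Px0; case: (arg_maxnP F Px0) => x Px Hx; exists x => //.
Qed.

Notation cmp := Defs.comp.
Lemma ex_min (T0 : finType) (P : pred T0) (F : T0 -> nat) :
  (exists x, P x) -> exists2 x, P x & forall y, P y -> F x <= F y.
Proof.
case=> x0 Px0; case: (arg_minnP F Px0) => x Px Hx; exists x => //.
Qed.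

Section Main.
Variable E : finType.
Variable L : {set svec E}.
Hypothesis HFS : FS L.
Hypothesis HSE : SE L.
Implicit Types (X Y Z V W a b c x y t : svec E) (e f g : E).

Definition zs (X : svec E) : {set E} := [set e | X e == None].
Definition geq (X W : svec E) : Prop := forall e, X e != None -> W e = X e.
Definition D (x y : svec E) : {set E} := [set e | x e != y e].
Definition full (X : svec E) := forall e, X e != None.

Lemma compE X Y e : cmp X Y e = if X e != None then X e else Y e.
Proof. by rewrite /Defs.comp /vneg ffunE. Qed.
Lemma vnegE X e : vneg X e = sneg (X e).
Proof. by rewrite /Defs.comp /vneg ffunE. Qed.

Lemma compL X Y : X \in L -> Y \in L -> cmp X Y \in L.
Proof.
move=> HX HY.
have -> : cmp X Y = cmp X (vneg (cmp X (vneg Y))).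
  apply/ffunP => e; rewrite !compE !vnegE compE vnegE.
  by case: (X e) => [b|] //=; case: (Y e) => [c|] //=; rewrite negbK.
by apply: HFS => //; apply: HFS.
Qed.

Lemma inT a : (a \in topes L) = (a \in L) && [forall e, a e != None].
Proof. by rewrite inE. Qed.

Lemma topesP a : a \in topes L -> a \in L /\ full a.
Proof. by rewrite inT => /andP [-> /forallP]. Qed.

Lemma topesI a : a \in L -> full a -> a \in topes L.
Proof. by move=> H1 H2; rewrite inT H1; apply/forallP. Qed.

Lemma sepE X Y e : (e \in sep X Y) = (sprod (X e) (Y e) == sMinus).
Proof. by rewrite inE. Qed.

Lemma sep_same X Y e : X e = Y e -> e \notin sep X Y.
Proof. by rewrite sepE => ->; case: (Y e) => [[]|]. Qed.

Lemma elimz V V' g : V \in L -> V' \in L -> g \in sep V V' ->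
  exists2 V'', V'' \in L & V'' g = None /\ forall f, V f = V' f -> V'' f = V f.
Proof.
move=> HV HV' Hg; case: (HSE HV HV' Hg) => Z HZ [Zg HZf].
exists Z => //; split => // f Hf.
by rewrite HZf ?sep_same // compE Hf; case: (V' f).
Qed.


Lemma zsE V e : (e \in zs V) = (V e == None).
Proof. by rewrite inE. Qed.

Lemma zs_grow V V'' g : (forall f, V f = None -> V'' f = None) ->
  V'' g = None -> V g != None -> #|zs V| < #|zs V''|.
Proof.
move=> Hs Hg Vg.
have Hsub : zs V \subset zs V'' :\ g.
  apply/subsetP => f; rewrite zsE !inE => /eqP Hf; rewrite Hs //= andbT.
  by apply/eqP => Efg; rewrite -Efg Hf in Vg.
rewrite (cardsD1 g (zs V'')) zsE Hg eqxx /=.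
by have := subset_leq_card Hsub; lia.
Qed.

Lemma geq_none X W e : geq X W -> W e = None -> X e = None.
Proof.
move=> H We; case: (boolP (X e == None)) => [/eqP//|Xe].
by move: (H e Xe); rewrite We => Hx; rewrite -Hx eqxx in Xe.
Qed.

Lemma sep_neg V e : V e != None -> e \in sep V (vneg (cmp (vneg V) V)) -> True.
Proof. by []. Qed.

Lemma sep_sneg V V' e : V e != None -> V' e = sneg (V e) -> e \in sep V V'.
Proof. by rewrite sepE => + ->; case: (V e) => [[]|]. Qed.

Section Core.
Variable X : svec E.
Hypothesis H0 : exists2 t0, t0 \in topes L & geq X t0.
Hypothesis Hr : forall t, t \in topes L -> geq X t -> cmp X (vneg t) \in L.

Lemma core_R k : forall W, W \in L -> geq X W -> #|zs W| <= k -> cmp X (vneg W) \in L.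
Proof.
elim: k => [|k IH] W WL XW Wk;
 (case: (boolP (zs W == set0)) => [/eqP Z0|Znz];
  [apply: Hr => //; apply: topesI => // e; apply/negP => /eqP We;
   by move: (in_set0 e); rewrite -Z0 zsE We|]).
  by move: Znz; rewrite -cards_eq0 -leqn0 Wk.
have cnz : forall e, W e != None -> cmp X (vneg W) e != None.
  by move=> e; rewrite compE vnegE; case: (X e); case: (W e).
case: H0 => t0 t0T Xt0; have [t0L t0f] := topesP t0T.
have WtL : cmp W t0 \in L := compL WL t0L.
have XWt : geq X (cmp W t0).
  by move=> e Xe; rewrite compE XW // Xe.
have R1L : cmp X (vneg (cmp W t0)) \in L.
  apply: IH => //.
  suff -> : zs (cmp W t0) = set0 by rewrite cards0.
  apply/setP => e; rewrite zsE inE compE; case: (W e) => [b|] //=; exact: negbTE (t0f e).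
pose inC V := (V \in L) && [forall e, (W e != None) ==> (V e == cmp X (vneg W) e)].
have : exists V, inC V.
  exists (cmp X (vneg (cmp W t0))); rewrite /inC R1L /=; apply/forallP => e.
  apply/implyP => We; rewrite !compE !vnegE compE We; done.
case/(ex_max (fun V => #|zs V|)) => V /andP [VL /forallP VC] maxV.
have VC' : forall e, W e != None -> V e = cmp X (vneg W) e.
  by move=> e We; apply/eqP; exact: (implyP (VC e) We).
have claim : forall g, W g = None -> V g = None.
  move=> g Wg; case: (boolP (V g == None)) => [/eqP//|Vg]; exfalso.
  have PL : cmp W V \in L := compL WL VL.
  have XP : geq X (cmp W V) by move=> e Xe; rewrite compE XW // Xe.
  have Pk : #|zs (cmp W V)| <= k.
    have Hsub : zs (cmp W V) \subset zs W :\ g.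
      apply/subsetP => f; rewrite !inE compE.
      case Wf: (W f) => [b|] //= Vf; rewrite andbT; apply/eqP => Efg.
      by rewrite -Efg (eqP Vf) in Vg.
    move: (subset_leq_card Hsub); rewrite (cardsD1 g (zs W)) zsE Wg eqxx /= in Wk.
    by move: Wk; clear -W V g k; lia.
  have V'L := IH _ PL XP Pk.
  have Xg : X g = None := geq_none XW Wg.
  have Hg : g \in sep V (cmp X (vneg (cmp W V))).
    by apply: sep_sneg => //; rewrite compE Xg vnegE compE Wg.
  case: (elimz VL V'L Hg) => V'' V''L [V''g HV''].
  have CV'' : inC V''.
    rewrite /inC V''L; apply/forallP => e; apply/implyP => We.
    have Ee : V e = cmp X (vneg (cmp W V)) e.
      by rewrite VC' // !compE !vnegE compE We.
    by rewrite (HV'' e Ee) VC'.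
  have H1 := maxV _ CV''.
  suff H2 : #|zs V| < #|zs V''| by move: (leq_ltn_trans H1 H2); rewrite ltnn.
  apply: (zs_grow (g := g)) => // f Vf.
  have Wf : W f = None.
    case: (boolP (W f == None)) => [/eqP//|Wf].
    by move: (cnz f Wf); rewrite -VC' // Vf.
  have Xf : X f = None := geq_none XW Wf.
  by rewrite HV'' Vf // compE Xf vnegE compE Wf Vf.
have -> : cmp X (vneg W) = V.
  apply/ffunP => e; case: (boolP (W e == None)) => [/eqP We|We].
    by rewrite claim // compE (geq_none XW We) vnegE We.
  by rewrite VC'.
by [].
Qed.
Lemma core : X \in L.
Proof.
pose inC V := (V \in L) && [forall e, (X e != None) ==> (V e == X e)].
have : exists V, inC V.
  case: H0 => t0 t0T Xt0; exists t0; rewrite /inC (topesP t0T).1 /=.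
  by apply/forallP => e; apply/implyP => Xe; rewrite Xt0.
case/(ex_max (fun V => #|zs V|)) => W /andP [WL /forallP WC] maxW.
have XW : geq X W by move=> e Xe; apply/eqP; exact: (implyP (WC e) Xe).
have claim : forall g, X g = None -> W g = None.
  move=> g Xg; case: (boolP (W g == None)) => [/eqP//|Wg]; exfalso.
  have W'L := @core_R #|zs W| W WL XW (leqnn _).
  have Hg : g \in sep W (cmp X (vneg W)).
    by apply: sep_sneg => //; rewrite compE Xg vnegE.
  case: (elimz WL W'L Hg) => V'' V''L [V''g HV''].
  have CV'' : inC V''.
    rewrite /inC V''L; apply/forallP => e; apply/implyP => Xe.
    have Ee : W e = cmp X (vneg W) e by rewrite compE Xe XW.
    by rewrite (HV'' e Ee) XW.
  have H1 := maxW _ CV''.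
  suff H2 : #|zs W| < #|zs V''| by move: (leq_ltn_trans H1 H2); rewrite ltnn.
  apply: (zs_grow (g := g)) => // f Wf.
  by rewrite HV'' Wf // compE (geq_none XW Wf) vnegE Wf.
have -> : X = W.
  apply/ffunP => e; case: (boolP (X e == None)) => [/eqP Xe|Xe].
    by rewrite claim.
  by rewrite XW.
by [].
Qed.
End Core.


Notation T := (topes L).

Lemma full_sep a b e : a e != None -> b e != None -> (e \in sep a b) = (a e != b e).
Proof. by rewrite sepE; case: (a e) => [[]|] //; case: (b e) => [[]|]. Qed.

Lemma full_neq a b e : a e != None -> b e != None -> a e != b e -> b e = sneg (a e).
Proof. by case: (a e) => [[]|] //; case: (b e) => [[]|]. Qed.

Lemma sneg_neq s : s != None -> sneg s != s.
Proof. by case: s => [[]|]. Qed.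

Lemma sneg_nz s : s != None -> sneg s != None.
Proof. by case: s => [[]|]. Qed.

Lemma tope_ex : L != set0 -> simple L -> exists t, t \in T.
Proof.
move=> HL0 Hsimple.
have : exists V, V \in L by case/set0Pn: HL0 => V HV; exists V.
case/(ex_min (fun V => #|zs V|)) => W WL minW.
exists W; apply: topesI => // e; apply/negP => /eqP We.
case: (Hsimple.1 e sPlus) => Y YL Ye.
have H1 := minW _ (compL WL YL).
have H2 : #|zs (cmp W Y)| < #|zs W|.
  apply: (zs_grow (g := e)).
  - move=> f; rewrite compE; case: (W f) => //.
  - exact: We.
  - by rewrite compE We Ye.
by move: (leq_ltn_trans H1 H2); rewrite ltnn.
Qed.

Lemma DE x y e : (e \in D x y) = (x e != y e).
Proof. by rewrite inE. Qed.

Lemma D_tri x y z : D x z \subset D x y :|: D y z.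
Proof.
apply/subsetP => e; rewrite !inE => H; apply/orP.
case: (boolP (x e == y e)) => [/eqP Exy|]; [right; by rewrite -Exy | by left].
Qed.

Lemma card_tri x y z : #|D x z| <= #|D x y| + #|D y z|.
Proof.
have := subset_leq_card (D_tri x y z); have := cardsUI (D x y) (D y z).
by clear; lia.
Qed.

Lemma Dxx x : D x x = set0.
Proof. by apply/setP => e; rewrite !inE eqxx. Qed.

Lemma path_lb (T0 : {set svec E}) x q : path (tadj T0) x q -> #|D x (last x q)| <= size q.
Proof.
elim: q x => [|y q IH] x /=; first by rewrite Dxx cards0.
case/andP => /and3P [_ _ Hxy] Hp.
have H1 := IH y Hp; have H2 := card_tri x y (last y q).
have H3 : #|D x y| = 1 by apply/eqP.
by move: H1 H2 H3; clear; lia.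
Qed.

Lemma path_mem (T0 : {set svec E}) x p c : path (tadj T0) x p -> c \in p -> c \in T0.
Proof.
elim: p x => [|y q IH] x //=; case/andP => /and3P [_ Hy _] Hp.
by rewrite in_cons => /orP [/eqP ->|]; [| apply: IH Hp].
Qed.

Lemma last_in (T0 : {set svec E}) x p : x \in T0 -> path (tadj T0) x p -> last x p \in T0.
Proof.
move=> Hx Hp; have := mem_last x p; rewrite in_cons => /orP [/eqP ->|] //.
exact: path_mem Hp.
Qed.

Lemma full_nsep a Z f : a f != None -> Z f != None -> f \notin sep a Z -> a f = Z f.
Proof. by rewrite sepE; case: (a f) => [[]|] //; case: (Z f) => [[]|]. Qed.

Lemma elim_face a c : a \in T -> c \in T -> D a c != set0 ->
  exists2 W, W \in L & [/\ geq W a, zs W != set0 & zs W \subset D a c].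
Proof.
move=> aT cT; case/set0Pn => e He.
have [aL af] := topesP aT; have [cL cf] := topesP cT.
have Hsep : e \in sep a c by rewrite full_sep // -DE.
case: (HSE aL cL Hsep) => Z ZL [Ze HZ].
suff gen : forall n Z, Z \in L -> (forall f, f \notin D a c -> Z f = a f) ->
    zs Z != set0 -> #|sep a Z| <= n ->
    exists2 W, W \in L & [/\ geq W a, zs W != set0 & zs W \subset D a c].
  apply: (gen _ Z ZL _ _ (leqnn _)).
    move=> f Hf; rewrite HZ ?compE ?af //.
    by rewrite full_sep // -DE.
  by apply/set0Pn; exists e; rewrite zsE Ze.
elim=> [|n IH] {e He Hsep ZL Ze HZ} Z ZL HZ Znz Hn;
  (case: (boolP (sep a Z == set0)) => [/eqP S0|Snz];
  [exists Z => //; split => //;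
   [ move=> f Zf; apply: full_nsep => //; by rewrite S0 inE
   | apply/subsetP => f; rewrite zsE => /eqP Zf; apply: contraT => Hf;
     by move: (HZ f Hf) (af f); rewrite Zf => <-]|]).
  by move: Snz Hn; rewrite -cards_eq0 leqn0 => /negbTE ->.
case/set0Pn: Snz => g Hg.
case: (HSE aL ZL Hg) => Z' Z'L [Z'g HZ'].
apply: (IH Z' Z'L).
- move=> f Hf; rewrite HZ' ?compE ?af //.
  by apply: sep_same; rewrite HZ.
- by apply/set0Pn; exists g; rewrite zsE Z'g.
- have Hsub : sep a Z' \subset sep a Z :\ g.
    apply/subsetP => f Hf; rewrite !inE.
    have Hfg : f != g.
      by apply/eqP => Efg; move: Hf; rewrite Efg sepE Z'g; case: (a g) => [[]|].
    rewrite Hfg /=; apply: contraT => Hn'.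
    move: Hf; rewrite sepE HZ'; last by rewrite sepE.
    by rewrite compE af; case: (a f) => [[]|].
  have := subset_leq_card Hsub; rewrite (cardsD1 g (sep a Z)) Hg in Hn.
  by move: Hn; clear; lia.
Qed.

Lemma prod_exact (s1 s2 t1 t2 : sign) : s1 != None -> s2 != None -> t1 != None -> t2 != None ->
  sprod t1 t2 != sprod s1 s2 -> (s1 != t1) && (s2 == t2) || (s1 == t1) && (s2 != t2).
Proof. by case: s1 => [[]|] //; case: s2 => [[]|] //; case: t1 => [[]|] //; case: t2 => [[]|]. Qed.

Lemma sprod_nz (s t : sign) : sprod s t != None -> s != None /\ t != None.
Proof. by case: s => [[]|] //; case: t => [[]|]. Qed.

Lemma onezero a b : simple L -> a \in T -> b \in T -> D a b != set0 ->
  exists e, e \in D a b /\ exists2 W, W \in L & geq W a /\ zs W = [set e].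
Proof.
move=> Hs aT bT Hne; have [aL af] := topesP aT.
case: (elim_face aT bT Hne) => W0 W0L [gW0 zW0 sW0].
suff gen : forall n W, W \in L -> geq W a -> zs W != set0 -> zs W \subset D a b ->
   #|zs W| <= n -> exists e, e \in D a b /\ exists2 W, W \in L & geq W a /\ zs W = [set e].
  exact: (gen _ W0 W0L gW0 zW0 sW0 (leqnn _)).
elim=> [|n IH] W WL gW zW sW Wn.
  by move: zW Wn; rewrite -cards_eq0 leqn0 => /negbTE ->.
case: (boolP (#|zs W| == 1)) => [/cards1P [e He]|Hn1].
  exists e; split; last by exists W.
  by apply: (subsetP sW); rewrite He set11.
case/set0Pn: (zW) => e He.
have : zs W :\ e != set0.
  apply: contra Hn1 => /eqP H0; apply/eqP.
  by rewrite (cardsD1 e (zs W)) He H0 cards0.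
case/set0Pn => f; rewrite !inE => /andP [Hfe Hf].
have Hef : e != f by rewrite eq_sym.
case: (Hs.2 e f Hef) => X [Y [XL YL Hxy HXnz HYnz]].
have [Q [QL Qne Qnz]] : exists Q, [/\ Q \in L, sprod (Q e) (Q f) != sprod (a e) (a f)
    & sprod (Q e) (Q f) != None].
  case: (boolP (sprod (X e) (X f) == sprod (a e) (a f))) => [/eqP HX|HX].
    by exists Y; split => //; rewrite -HX eq_sym.
  by exists X.
have [Qe Qf] := sprod_nz Qnz.
pose c := cmp W (cmp Q a).
have cL : c \in L by apply: compL => //; apply: compL.
have cT : c \in T.
  apply: topesI => // g; rewrite /c !compE.
  by case: (W g) => //; case: (Q g) => //; exact: af.
have We : W e = None by apply/eqP; move: He; rewrite ?zsE.
have Wf : W f = None by apply/eqP; move: Hf; rewrite ?zsE.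
have ce : c e = Q e by rewrite /c !compE We Qe.
have cf : c f = Q f by rewrite /c !compE Wf Qf.
have Dsub : D a c \subset zs W.
  apply/subsetP => g; rewrite DE zsE; apply: contraR => Wg.
  by rewrite /c compE Wg (gW g Wg).
have cf' := (topesP cT).2.
have Hcp : sprod (c e) (c f) != sprod (a e) (a f) by rewrite ce cf.
have Hex := prod_exact (af e) (af f) (cf' e) (cf' f) Hcp.
have [h [Hh1 Hh2]] : exists h, h \in zs W /\ h \notin D a c.
  case/orP: Hex => /andP [H1 H2]; [exists f | exists e];
    (split; [by rewrite zsE ?Wf ?We | by rewrite DE ?H1 ?H2]).
have Hne' : D a c != set0.
  apply/set0Pn; case/orP: Hex => /andP [H1 H2]; [exists e | exists f]; by rewrite DE ?H1 ?H2.
case: (elim_face aT cT Hne') => W' W'L [gW' zW' sW'].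
apply: (IH W' W'L gW' zW').
  by apply: (subset_trans sW'); apply: (subset_trans Dsub).
have H1 := subset_leq_card sW'.
have Hsub2 : D a c \subset zs W :\ h.
  apply/subsetP => g Hg; rewrite in_setD1 (subsetP Dsub _ Hg) andbT.
  by apply: contraNneq Hh2 => <-.
have H2 := subset_leq_card Hsub2.
move: Wn; rewrite (cardsD1 h (zs W)) Hh1.
by move: H1 H2; clear; lia.
Qed.

Lemma iso n : simple L -> forall a b, a \in T -> b \in T -> #|D a b| = n ->
  exists p, [/\ path (tadj T) a p, last a p = b & size p = n].
Proof.
move=> Hs; elim: n => [|n IH] a b aT bT Hn.
  exists [::]; split => //=; apply/ffunP => e; apply/eqP; apply: contraT => H.
  by move/eqP: Hn; rewrite cards_eq0 => /eqP D0; move: H; rewrite -DE D0 inE.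
have Hne : D a b != set0 by rewrite -cards_eq0 Hn.
have [aL af] := topesP aT; have [bL bf] := topesP bT.
case: (onezero Hs aT bT Hne) => e [He [W WL [gW zW]]].
pose U := cmp W (vneg a).
have UL : U \in L by apply: HFS.
have We : W e = None by apply/eqP; rewrite -zsE zW set11.
have Uo : forall g, g != e -> U g = a g.
  move=> g Hg; have Wg : W g != None by rewrite -zsE zW inE.
  by rewrite /U compE Wg (gW g Wg).
have Ue : U e = sneg (a e) by rewrite /U compE We vnegE.
have UT : U \in T.
  apply: topesI => // g; case: (boolP (g == e)) => [/eqP ->|Hg].
    by rewrite Ue sneg_nz.
  by rewrite Uo.
have DaU : D a U = [set e].
  apply/setP => g; rewrite DE inE; case: (boolP (g == e)) => [/eqP ->|Hg].
    by rewrite Ue eq_sym sneg_neq.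
  by rewrite Uo // eqxx.
have DUb : D U b = D a b :\ e.
  apply/setP => g; rewrite !inE; case: (boolP (g == e)) => [/eqP ->|Hg] /=.
    by rewrite Ue -(full_neq (af e) (bf e)) ?eqxx // -DE.
  by rewrite Uo.
have : #|D U b| = n.
  by move: Hn; rewrite DUb (cardsD1 e (D a b)) He add1n => -[].
case/(IH U b UT bT) => p [Hp Hl Hsz].
exists (U :: p); split => //=; last by rewrite Hsz.
by rewrite Hp andbT /tadj aT UT /=; rewrite -/(D a U) DaU cards1.
Qed.

Lemma full3 a b c e : a e != None -> b e != None -> c e != None ->
  a e != c e -> c e != b e -> a e = b e.
Proof. by case: (a e) => [[]|] //; case: (b e) => [[]|] //; case: (c e) => [[]|]. Qed.

Lemma tfull a e : a \in T -> a e != None.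
Proof. by move/topesP => [_ ]; apply. Qed.

Lemma between x p c : simple L -> x \in T -> shortest T x p -> c \in p ->
  forall e, x e = (last x p) e -> c e = x e.
Proof.
move=> Hs xT [Hp Hmin] Hc e Hxe.
have yT := last_in xT Hp.
case: (iso Hs xT yT (erefl _)) => q [Hq Hql Hqs].
have Hle : size p <= #|D x (last x p)| by rewrite -Hqs; apply: Hmin.
apply/eqP; apply: contraT => Hce.
move: Hp Hle Hxe; case/path.splitP: Hc => p1 p2 Hp Hle Hxe.
move: Hp; rewrite cat_path last_rcons => /andP [Hp1 Hp2].
move: Hle Hxe; rewrite last_cat last_rcons size_cat size_rcons => Hle Hxe.
have H1 := path_lb Hp1; rewrite last_rcons size_rcons in H1.
have H2 := path_lb Hp2.
set y := last c p2 in Hle Hxe H2.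
have Hsub : D x y \subset (D x c :|: D c y) :\ e.
  apply/subsetP => g Hg; rewrite in_setD1 (subsetP (D_tri x c y) _ Hg) andbT.
  by apply: contraTneq Hg => ->; rewrite DE Hxe eqxx.
have H3 := subset_leq_card Hsub.
have H4 := cardsD1 e (D x c :|: D c y).
have H5 := cardsUI (D x c) (D c y).
have He : e \in D x c :|: D c y by rewrite in_setU DE eq_sym Hce.
rewrite He in H4.
by move: H1 H2 H3 H4 H5 Hle; clear; lia.
Qed.

Lemma geo x y c : simple L -> x \in T -> y \in T -> c \in T ->
  (forall e, x e = y e -> c e = x e) ->
  exists p, [/\ shortest T x p, last x p = y & c \in x :: p].
Proof.
move=> Hs xT yT cT Hc.
case: (iso Hs xT cT (erefl _)) => p1 [Hp1 Hl1 Hs1].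
case: (iso Hs cT yT (erefl _)) => p2 [Hp2 Hl2 Hs2].
have Hl : last x (p1 ++ p2) = y by rewrite last_cat Hl1.
exists (p1 ++ p2); split => //.
- split; first by rewrite cat_path Hp1 Hl1.
  move=> q Hq; rewrite Hl => Hql.
  have Hb := path_lb Hq; rewrite Hql in Hb.
  have Hdis : D x c :&: D c y = set0.
    apply/setP => g; rewrite !inE; apply/negP => /andP [H1 H2].
    have Exy := full3 (tfull g xT) (tfull g yT) (tfull g cT) H1 H2.
    by move: H1; rewrite (Hc g Exy) eqxx.
  have Hun : D x c :|: D c y \subset D x y.
    apply/subsetP => g; rewrite in_setU !DE => /orP [] H; apply: contra H => /eqP Exy;
      by rewrite (Hc g Exy) ?Exy.
  have H1 := subset_leq_card Hun; have H2 := cardsUI (D x c) (D c y).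
  rewrite Hdis cards0 in H2.
  by rewrite size_cat Hs1 Hs2; move: Hb H1 H2; clear; lia.
- have := mem_last x p1; rewrite Hl1 !in_cons mem_cat => /orP [->|->] //.
  by rewrite orbT.
Qed.

Definition TX X := [set t in T | [forall e, (X e != None) ==> (t e == X e)]].

Lemma TX_T X t : t \in TX X -> t \in T.
Proof. by rewrite inE => /andP []. Qed.

Lemma TX_val X t e : t \in TX X -> X e != None -> t e = X e.
Proof. by rewrite inE => /andP [_ /forallP H] Xe; apply/eqP; exact: (implyP (H e) Xe). Qed.

Lemma TX_I X t : t \in T -> (forall e, X e != None -> t e = X e) -> t \in TX X.
Proof. by move=> tT H; rewrite inE tT /=; apply/forallP => e; apply/implyP => /H ->. Qed.

Lemma TX_cmp X t : X \in L -> t \in T -> cmp X t \in TX X.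
Proof.
move=> XL tT; have [tL tf] := topesP tT; apply: TX_I.
  apply: topesI; first exact: compL.
  by move=> e; rewrite compE; case: (X e) => //; exact: tf.
by move=> e Xe; rewrite compE Xe.
Qed.

Lemma TX_cmpn X t : X \in L -> t \in T -> cmp X (vneg t) \in TX X.
Proof.
move=> XL tT; have [tL tf] := topesP tT; apply: TX_I.
  apply: topesI; first exact: HFS.
  by move=> e; rewrite compE vnegE; case: (X e) => //; exact: sneg_nz.
by move=> e Xe; rewrite compE Xe.
Qed.

Lemma XG_all (H : {set svec E}) e (b : bool) : (exists t, t \in H) -> (forall t, t \in H -> t e = Some b) ->
  XG H e = Some b.
Proof.
case=> t0 Ht0 Hall; rewrite /XG ffunE.
case: b Hall => Hall.
  by rewrite (_ : [forall _ in _, _] = true) //; apply/forall_inP => t Ht; rewrite Hall.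
rewrite (_ : [forall x in H, x e == sPlus] = false); last first.
  by apply/negbTE/forall_inPn; exists t0 => //; rewrite Hall.
by rewrite (_ : [forall _ in _, _] = true) //; apply/forall_inP => t Ht; rewrite Hall.
Qed.

Lemma XG_mixed (H : {set svec E}) e t1 t2 : t1 \in H -> t2 \in H ->
  t1 e = Some true -> t2 e = Some false -> XG H e = None.
Proof.
move=> H1 H2 E1 E2; rewrite /XG ffunE.
rewrite (_ : [forall x in H, x e == sPlus] = false); last first.
  by apply/negbTE/forall_inPn; exists t2 => //; rewrite E2.
rewrite (_ : [forall x in H, x e == sMinus] = false) //.
  by apply/negbTE/forall_inPn; exists t1 => //; rewrite E1.
Qed.

Lemma XG_cases (H : {set svec E}) t e : t \in H -> XG H e != None -> t e = XG H e.
Proof.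
move=> Ht; rewrite /XG ffunE.
case: ifP => [/forall_inP A _|_]; first by apply/eqP; apply: A.
case: ifP => [/forall_inP A _|//]; by apply/eqP; apply: A.
Qed.

Lemma faceA X : simple L -> L != set0 -> X \in L ->
  [/\ antipodal T (TX X), gated T (TX X) & XG (TX X) = X].
Proof.
move=> Hs HL0 XL; case: (tope_ex HL0 Hs) => t0 t0T; have [t0L t0f] := topesP t0T.
have g1 := TX_cmp XL t0T; have g2 := TX_cmpn XL t0T.
have Hsub : TX X \subset T by apply/subsetP => t; exact: TX_T.
have Hconv : convex T (TX X).
  split => // x0 p Hx0 Hl Hsh; apply/allP => c Hc.
  apply: TX_I; first exact: path_mem Hsh.1 Hc.
  move=> e Xe; rewrite (between Hs (TX_T Hx0) Hsh Hc); first exact: TX_val Hx0 Xe.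
  by rewrite (TX_val Hx0 Xe) (TX_val Hl Xe).
split.
- split => //; first by apply/set0Pn; exists (cmp X t0).
  move=> x Hx; have xT := TX_T Hx.
  have Hy := TX_cmpn XL xT; exists (cmp X (vneg x)); split => //; split => //.
    by apply/subsetP => z /set2P [] ->.
  move=> H' [H'sub H'conv] Hxy; apply/subsetP => z Hz.
  have xH' : x \in H' by apply: (subsetP Hxy); rewrite set21.
  have yH' : cmp X (vneg x) \in H' by apply: (subsetP Hxy); rewrite set22.
  case: (geo Hs xT (TX_T Hy) (TX_T Hz) (c := z)) => [e Exy|p [Hsh Hl Hzp]].
    case: (boolP (X e == None)) => [/eqP Xe|Xe].
      move: Exy; rewrite compE Xe vnegE /= => Exy.
      by move: (sneg_neq (tfull e xT)); rewrite -Exy eqxx.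
    by rewrite (TX_val Hz Xe) (TX_val Hx Xe).
  have yH'' : last x p \in H' by rewrite Hl.
  have Hall := H'conv x p xH' yH'' Hsh.
  by move: Hzp; rewrite in_cons => /orP [/eqP ->|/(allP Hall)].
- split => // t tT; have Hg := TX_cmp XL tT; exists (cmp X t) => // y Hy.
  case: (geo Hs tT (TX_T Hy) (TX_T Hg) (c := cmp X t)) => [e Ety|p [Hsh Hl Hzp]].
    rewrite compE; case: ifP => // Xe.
    by rewrite -(TX_val Hy Xe).
  by exists p.
- apply/ffunP => e; case Xe: (X e) => [b|].
    apply: XG_all; first by exists (cmp X t0).
    by move=> t Ht; rewrite (TX_val Ht) ?Xe.
  have E1 : cmp X t0 e = t0 e by rewrite compE Xe.
  have E2 : cmp X (vneg t0) e = sneg (t0 e) by rewrite compE Xe vnegE.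
  move: (t0f e) E1 E2; case: (t0 e) => [[]|] // _ E1 E2.
    exact: (XG_mixed g1 g2 E1 E2).
  exact: (XG_mixed g2 g1 E2 E1).
Qed.

Lemma faceB H : simple L -> antipodal T H -> XG H \in L /\ H = TX (XG H).
Proof.
move=> Hs [Hsub Hne Hanti]; set X := XG H.
have HT : forall t, t \in H -> t \in T by move=> t; apply: (subsetP Hsub).
have HX : forall t e, t \in H -> X e != None -> t e = X e by move=> t e; apply: XG_cases.
have key : forall x y e, antipode T H x y -> x \in H -> x e = y e -> X e = x e.
  move=> x y e [yH [Hconv Hxy Hmin]] xH Exy.
  pose H' := [set t in T | t e == x e].
  have H'E : forall t, (t \in H') = (t \in T) && (t e == x e).
    by move=> t; rewrite /H' in_set.
  have cH' : convex T H'.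
    split; first by apply/subsetP => t; rewrite H'E => /andP [].
    move=> x0 p; rewrite !H'E => /andP [x0T /eqP E0] /andP [_ /eqP El] Hsh.
    apply/allP => c Hc; suff : c \in H' by [].
    rewrite H'E (path_mem Hsh.1 Hc) /=.
    by rewrite (between Hs x0T Hsh Hc) ?E0 ?El.
  have HH' : H \subset H'.
    apply: Hmin => //; apply/subsetP => z /set2P [] ->; rewrite H'E ?HT //= Exy //.
  have Hall : forall t, t \in H -> t e = x e.
    by move=> t /(subsetP HH'); rewrite H'E => /andP [_ /eqP].
  case Exe: (x e) => [b|].
    by apply: XG_all; [exists x | move=> t /Hall ->].
  by move: (tfull e (HT x xH)); rewrite Exe.
have refl : forall x y, x \in H -> antipode T H x y -> y = cmp X (vneg x).
  move=> x y xH Hxy; apply/ffunP => e; rewrite compE vnegE.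
  case: (boolP (X e == None)) => [/eqP Xe|Xe]; last by rewrite (HX y e Hxy.1 Xe).
  rewrite Xe /=; apply: full_neq; rewrite ?tfull ?HT //; first exact: Hxy.1.
  by apply: contraNneq (tfull e (HT x xH)) => /(key x y e Hxy xH) <-; rewrite Xe.
case/set0Pn: Hne => x0 x0H; case: (Hanti x0 x0H) => y0 Hxy0.
have x0T := HT x0 x0H; have y0H := Hxy0.1; have y0T := HT y0 y0H.
have HTX : H = TX X.
  apply/eqP; rewrite eqEsubset; apply/andP; split.
    by apply/subsetP => t tH; apply: TX_I; [exact: HT | move=> e; apply: HX].
  apply/subsetP => z Hz.
  case: (geo Hs x0T y0T (TX_T Hz) (c := z)) => [e Exy|p [Hsh Hl Hzp]].
    have Ke := key x0 y0 e Hxy0 x0H Exy.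
    by rewrite (TX_val Hz) ?Ke // tfull.
  have [Hconv _ _] := Hxy0.2.
  have ylH : last x0 p \in H by rewrite Hl.
  have Hall := Hconv.2 x0 p x0H ylH Hsh.
  by move: Hzp; rewrite in_cons => /orP [/eqP ->|/(allP Hall)].
split => //; apply: core.
  by exists x0 => // e Xe; apply: HX.
move=> t tT gt; have tH : t \in H by rewrite HTX; apply: TX_I.
case: (Hanti t tH) => y Hy; rewrite -(refl t y tH Hy).
exact: (topesP (HT y Hy.1)).1.
Qed.

Lemma LG_eq : simple L -> L != set0 -> L = LG T.
Proof.
move=> Hs HL0; apply/setP => X; apply/idP/idP.
  move=> XL; rewrite inE; apply/forall_inP => Y YT.
  apply: topesI; first by apply: HFS => //; exact: (topesP YT).1.
  by move=> e; rewrite compE vnegE; case: (X e) => //; apply: sneg_nz; apply: tfull.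
rewrite inE => /forall_inP HX; apply: core.
  case: (tope_ex HL0 Hs) => t0 t0T; exists (cmp X (vneg t0)); first exact: HX.
  by move=> e Xe; rewrite compE Xe.
by move=> t tT _; exact: (topesP (HX t tT)).1.
Qed.
End Main.

Theorem mainTheorem2 (E : finType) (L : {set svec E}) :
  0 < #|E| ->
  COM L -> simple L ->
  let T := topes L in
  [/\ (forall X, X \in L <-> exists H, antipodal T H /\ X = XG H),
      (forall X, X \in L <-> exists H, [/\ antipodal T H, gated T H & X = XG H]),
      L = LG T &
      (forall H, antipodal T H -> gated T H)].
Proof.
move=> _ [HL0 [HFS HSE]] Hs T.
have Hgat : forall H, antipodal T H -> gated T H.
  move=> H HA; have [XL HE] := faceB HFS HSE Hs HA.
  have [_ G _] := faceA HFS HSE Hs HL0 XL.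
  by rewrite HE.
split.
- move=> X; split.
    move=> XL; have [A _ G] := faceA HFS HSE Hs HL0 XL.
    by exists (TX L X).
  by case=> H [HA ->]; exact: (faceB HFS HSE Hs HA).1.
- move=> X; split.
    move=> XL; have [A G HX] := faceA HFS HSE Hs HL0 XL.
    by exists (TX L X).
  by case=> H [HA _ ->]; exact: (faceB HFS HSE Hs HA).1.
- exact: LG_eq.
- exact: Hgat.
Qed.
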